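(* Let $d_{in}, d_{out}, d_{\rm key}, k, m$ be positive integers, let $\mathbf W_q, \mathbf W_{\rm key} \in \mathbb R^{d_{in}\times d_{\rm key}}$ and $\mathbf W_v \in \mathbb R^{d_{in}\times d_{out}}$, and let $\sigma_q, \sigma_{\rm key}, \sigma_v$ denote the largest singular values of $\mathbf W_q, \mathbf W_{\rm key}, \mathbf W_v$ respectively. Let $\mathbf X_0 \in \mathbb R^{m\times d_{in}}$ (imposed state) with rows $(\mathbf X_0)^1,\dots,(\mathbf X_0)^m$, let $M_x := \max_j \|(\mathbf X_0)^j\|$, let $M_u>0$, and let $\mathbf Y^* \in \mathbb R^{m\times d_{out}}$ (desired output) with rows $\mathbf Y^{*1},\dots,\mathbf Y^{*m}$. Define $$\alpha := \frac{\sigma_q\sigma_{\rm key}M_uM_x}{\sqrt{d_{\rm key}}},\qquad g_i := \sum_{j=1}^m \exp\!\Big(\frac{(\mathbf X_0)^i\mathbf W_q\mathbf W_{\rm key}^\top (\mathbf X_0)^{j\top}}{\sqrt{d_{\rm key}}}\Big),\qquad \gamma_i := \frac{e^{\alpha}}{g_i}\,\sigma_v M_u .$$ Let $\mathbf Y_x^{\max} := \Xi(\mathbf X_0;\boldsymbol\theta)\in\mathbb R^{m\times d_{out}}$, and for each $i$ let $\mathbf Y^{\max,i}_{x,\perp}$ denote the orthogonal projection of the $i$-th row of $\mathbf Y_x^{\max}$ onto the orthogonal complement (in $\mathbb R^{d_{out}}$) of $\operatorname{span}(\mathbf Y^{*i})$. Suppose that for some $i\in\{1,\dots,m\}$, $$\|\mathbf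 Y^{\max,i}_{x,\perp}\| > k\,\gamma_i .$$ Then for every control input $\mathbf U\in\mathbb R^{k\times d_{in}}$ whose rows satisfy $\|\mathbf U^j\|\le M_u$ for all $j=1,\dots,k$, the output $\mathbf Y$ (the last $m$ rows of $\Xi([\mathbf U;\mathbf X_0];\boldsymbol\theta)$) satisfies $\mathbf Y\neq \mathbf Y^*$; i.e., $\mathbf Y^*$ is unreachable with $k$ control tokens of norm at most $M_u$.
   Context: Self-attention with parameters $\boldsymbol\theta=(\mathbf W_q,\mathbf W_{\rm key},\mathbf W_v)$ is the map $\Xi(\cdot;\boldsymbol\theta):\mathbb R^{N\times d_{in}}\to\mathbb R^{N\times d_{out}}$ (for any $N$) given by $\Xi(\mathbf X;\boldsymbol\theta)=\mathbf D^{-1}\exp\!\big(\mathbf Q\mathbf K^\top/\sqrt{d_{\rm key}}\big)\mathbf V$, where $\mathbf Q=\mathbf X\mathbf W_q$, $\mathbf K=\mathbf X\mathbf W_{\rm key}$, $\mathbf V=\mathbf X\mathbf W_v$, $\exp$ is applied entrywise, and $\mathbf D=\operatorname{diag}\big(\exp(\mathbf Q\mathbf K^\top/\sqrt{d_{\rm key}})\mathbf 1_{N\times1}\big)$ (i.e., row-wise softmax attention, no masking). For $\mathbf U\in\mathbb R^{k\times d_{in}}$ and $\mathbf X_0\in\mathbb R^{m\times d_{in}}$, $[\mathbf U;\mathbf X_0]\in\mathbb R^{(k+m)\times d_{in}}$ denotes vertical concatenation (rows of $\mathbf U$ first), and the output $\Xi([\mathbf U;\mathbf X_0];\boldsymbol\theta)$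 is partitioned as $[\mathbf U';\mathbf Y]$ with $\mathbf U'\in\mathbb R^{k\times d_{out}}$, $\mathbf Y\in\mathbb R^{m\times d_{out}}$. Rows of matrices are indexed by superscripts; norms of rows are Euclidean. *)

(* Defs.v *)
From HB Require Import structures.
From mathcomp Require Import all_boot all_order all_algebra.
From mathcomp Require Import all_classical all_reals all_analysis.
Set Implicit Arguments. Unset Strict Implicit. Unset Printing Implicit Defensive.
Import Order.TTheory GRing.Theory Num.Theory.
Local Open Scope ring_scope.
Local Open Scope classical_set_scope.

Section Defs.
Variable R : realType.

Definition rnorm (n : nat) (v : 'rV[R]_n) : R :=
  Num.sqrt (\sum_(j < n) v 0 j ^+ 2).

Definition sigma_max (a b : nat) (W : 'M[R]_(a, b)) : R :=
  Num.sqrt (sup [set x : R | eigenvalue (W^T *m W) x]).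

Definition attn (N din dout dkey : nat) (Wq Wk : 'M[R]_(din, dkey))
    (Wv : 'M[R]_(din, dout)) (X : 'M[R]_(N, din)) : 'M[R]_(N, dout) :=
  let Q := X *m Wq in
  let K := X *m Wk in
  let V := X *m Wv in
  let E := map_mx expR ((Num.sqrt (dkey%:R))^-1 *: (Q *m K^T)) in
  let D := diag_mx (\row_(i < N) \sum_(l < N) E i l) in
  invmx D *m E *m V.

Definition proj_perp (n : nat) (v y : 'rV[R]_n) : 'rV[R]_n :=
  if y == 0 then v
  else v - ((v *m y^T) 0 0 / (y *m y^T) 0 0) *: y.

End Defs.

(* Main.v *)
Require Import Defs.
From HB Require Import structures.
From mathcomp Require Import all_boot all_order all_algebra.
From mathcomp Require Import all_classical all_reals all_analysis.
From mathcomp Require Import ring lra.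
From mathcomp Require Import complex.
Import Order.TTheory GRing.Theory Num.Theory.
Local Open Scope ring_scope.

Module Aux.
Set Implicit Arguments. Unset Strict Implicit. Unset Printing Implicit Defensive.

Section Dot.
Variable R : realType.

Lemma msg0 (x : R) : 0 <= x * x.
Proof. by rewrite -expr2 sqr_ge0. Qed.

Definition dot n (u v : 'rV[R]_n) : R := (u *m v^T) 0 0.

Lemma dotE n (u v : 'rV[R]_n) : dot u v = \sum_j u 0 j * v 0 j.
Proof. by rewrite /dot mxE; apply: eq_bigr => j _; rewrite mxE. Qed.

Lemma dotC n (u v : 'rV[R]_n) : dot u v = dot v u.
Proof. by rewrite !dotE; apply: eq_bigr => j _; rewrite mulrC. Qed.

Lemma dotDl n (u w v : 'rV[R]_n) : dot (u + w) v = dot u v + dot w v.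
Proof. by rewrite !dotE -big_split; apply: eq_bigr => j _; rewrite mxE mulrDl. Qed.

Lemma dotZl n a (u v : 'rV[R]_n) : dot (a *: u) v = a * dot u v.
Proof. by rewrite !dotE mulr_sumr; apply: eq_bigr => j _; rewrite mxE mulrA. Qed.

Lemma dotNl n (u v : 'rV[R]_n) : dot (- u) v = - dot u v.
Proof. by rewrite -scaleN1r dotZl mulN1r. Qed.

Lemma dotBl n (u w v : 'rV[R]_n) : dot (u - w) v = dot u v - dot w v.
Proof. by rewrite dotDl dotNl. Qed.

Lemma dotDr n (u w v : 'rV[R]_n) : dot v (u + w) = dot v u + dot v w.
Proof. by rewrite dotC dotDl !(dotC v). Qed.

Lemma dotZr n a (u v : 'rV[R]_n) : dot v (a *: u) = a * dot v u.
Proof. by rewrite dotC dotZl dotC. Qed.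

Lemma dotBr n (u w v : 'rV[R]_n) : dot v (u - w) = dot v u - dot v w.
Proof. by rewrite dotC dotBl !(dotC v). Qed.

Lemma dot0r n (u : 'rV[R]_n) : dot u 0 = 0.
Proof. by rewrite dotE big1 // => j _; rewrite mxE mulr0. Qed.

Lemma dot0l n (u : 'rV[R]_n) : dot 0 u = 0.
Proof. by rewrite dotC dot0r. Qed.

Lemma dot_ge0 n (u : 'rV[R]_n) : 0 <= dot u u.
Proof. by rewrite dotE; apply: sumr_ge0 => j _; rewrite msg0. Qed.

Lemma dot_eq0 n (u : 'rV[R]_n) : dot u u = 0 -> u = 0.
Proof.
rewrite dotE => /eqP; rewrite psumr_eq0 => [/allP H|j _]; last by rewrite msg0.
apply/rowP => j; rewrite mxE; apply/eqP.
have := H j (mem_index_enum _); by rewrite mulf_eq0 orbb.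
Qed.

Lemma rnormE n (u : 'rV[R]_n) : rnorm u = Num.sqrt (dot u u).
Proof. by rewrite /rnorm dotE; congr Num.sqrt; apply: eq_bigr => j _; rewrite expr2. Qed.

Lemma rnorm_ge0 n (u : 'rV[R]_n) : 0 <= rnorm u.
Proof. by rewrite rnormE sqrtr_ge0. Qed.

Lemma rnorm2 n (u : 'rV[R]_n) : rnorm u ^+ 2 = dot u u.
Proof. by rewrite rnormE sqr_sqrtr // dot_ge0. Qed.

Lemma CS n (u v : 'rV[R]_n) : dot u v ^+ 2 <= dot u u * dot v v.
Proof.
have [v0|vn0] := eqVneq (dot v v) 0.
  by rewrite (dot_eq0 v0) !dot0r expr0n mulr0.
have vp : 0 < dot v v by rewrite lt_def vn0 dot_ge0.
set t := dot u v / dot v v.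
have := dot_ge0 (u - t *: v).
rewrite !dotBl !dotBr !dotZl !dotZr (dotC v u).
have -> : dot u u - t * dot u v - (t * dot u v - t * (t * dot v v)) =
          dot u u - dot u v ^+ 2 / dot v v.
  rewrite /t; field; exact: vn0.
rewrite subr_ge0 ler_pdivrMr //.
Qed.

Lemma dot_le n (u v : 'rV[R]_n) : dot u v <= rnorm u * rnorm v.
Proof.
have h := CS u v.
rewrite rnormE rnormE -sqrtrM ?dot_ge0 //.
have [le0|gt0] := leP (dot u v) 0.
  by apply: le_trans le0 _; rewrite sqrtr_ge0.
by rewrite -(ger0_norm (ltW gt0)) -sqrtr_sqr; exact: ler_wsqrtr.
Qed.

Lemma rnormZ n a (u : 'rV[R]_n) : rnorm (a *: u) = `|a| * rnorm u.
Proof.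
by rewrite !rnormE dotZl dotZr mulrA -expr2 sqrtrM ?sqr_ge0 // sqrtr_sqr.
Qed.

Lemma rnormD n (u v : 'rV[R]_n) : rnorm (u + v) <= rnorm u + rnorm v.
Proof.
rewrite -(ler_pXn2r (isT : (0 < 2)%N)) ?nnegrE ?addr_ge0 ?rnorm_ge0 //.
rewrite rnorm2 dotDl !dotDr sqrrD !rnorm2 (dotC v u).
have := dot_le u v; lra.
Qed.

Lemma rnorm_sum n (I : finType) (F : I -> 'rV[R]_n) :
  rnorm (\sum_i F i) <= \sum_i rnorm (F i).
Proof.
elim/big_ind2: _ => //.
  by rewrite rnormE dot0r sqrtr0.
by move=> x1 x2 y1 y2 h1 h2; apply: le_trans (rnormD _ _) _; exact: lerD.
Qed.

End Dot.

Section SpecS.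
Local Open Scope sesquilinear_scope.

Section Spec.
Variable R : realType.

Lemma Cr_real (x : R) : (x%:C)%C \is Num.real.
Proof. by apply/complex_realP; exists x. Qed.

Lemma spec_bound n (A : 'M[R]_n.+1) : A^T = A ->
  exists D, eigenvalue A D /\ forall y : 'rV[R]_n.+1, dot (y *m A) y <= D * dot y y.
Proof.
move=> Asym.
pose f := real_complex R.
pose Ac := map_mx f A.
have Aherm : Ac \is hermsymmx.
  apply/is_hermitianmxP; rewrite expr0 scale1r; apply/matrixP => i j.
  rewrite !mxE conj_Creal ?Cr_real //.
  by rewrite -[in LHS]Asym mxE.
have /orthomx_spectralP Adec := hermitian_normalmx Aherm.
set P := spectralmx Ac in Adec.
set d := spectral_diag Ac in Adec.
have Pu : P \is unitarymx := spectral_unitarymx Ac.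
have PU : P \in unitmx := spectral_unit Ac.
have Pinv : invmx P = P^t* := invmx_unitary Pu.
have dreal : d \is a realmx := hermitian_spectral_diag_real Aherm.
have dR j : d 0 j = ((complex.Re (d 0 j))%:C)%C by rewrite RRe_real // (mxOverP dreal).
pose i0 := [arg max_(i > ord0) complex.Re (d 0 i)]%O.
have i0max j : complex.Re (d 0 j) <= complex.Re (d 0 i0).
  by rewrite /i0; case: Order.TotalTheory.arg_maxP => // i _ H; exact: H.
exists (complex.Re (d 0 i0)); split.
  have rowE0 : row i0 P *m Ac = d 0 i0 *: row i0 P.
    rewrite -row_mul Adec !mulmxA mulmxV // mul1mx row_mul row_diag_mx.
    by rewrite -scalemxAl -rowE.
  have rowN0 : row i0 P != 0.
    apply/eqP => h.
    have := unitarymxP Pu => /(congr1 (row i0)); rewrite row_mul h mul0mx.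
    move/rowP/(_ i0); rewrite !mxE eqxx /= => /eqP; by rewrite eq_sym oner_eq0.
  have ev : eigenvalue Ac (d 0 i0) by apply/eigenvalueP; exists (row i0 P).
  move: ev; rewrite eigenvalue_root_char dR -map_char_poly fmorph_root.
  by rewrite -eigenvalue_root_char.
move=> y.
pose yc := map_mx f y.
have ycT : yc^T = yc ^t*.
  by apply/matrixP => i j; rewrite !mxE conj_Creal // Cr_real.
have e1 : ((dot (y *m A) y)%:C)%C = (yc *m Ac *m yc^T) 0 0.
  by rewrite /dot /yc /Ac map_trmx -!map_mxM [RHS]mxE.
have e2 : ((dot y y)%:C)%C = (yc *m yc^T) 0 0.
  by rewrite /dot /yc /Ac map_trmx -!map_mxM [RHS]mxE.
pose w := yc *m P^t*.
have wT : w ^t* = P *m yc^t*.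
  by rewrite /w trmx_mul map_mxM trmxCK.
have e3 : yc *m Ac *m yc^T = w *m diag_mx d *m w^t*.
  by rewrite ycT wT Adec Pinv /w !mulmxA.
have e4 : yc *m yc^T = w *m w^t*.
  by rewrite ycT wT /w !mulmxA -(mulmxA yc) -Pinv mulVmx // mulmx1.
rewrite -lecR e1 rmorphM /= e2 e3 e4.
rewrite mul_mx_diag mxE [X in _ <= _ * X]mxE mulr_sumr; apply: ler_sum => j _.
rewrite [X in X * _ <= _]mxE.
have -> : w^t* j 0 = (w 0 j)^* by rewrite !mxE.
rewrite mulrAC [X in _ <= X]mulrC ler_wpM2l ?mul_conjC_ge0 //.
by rewrite dR lecR.
Qed.

End Spec.

End SpecS.
Section SigS.
Local Open Scope classical_set_scope.

Section Sig.
Variable R : realType.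

Lemma dot_mulmx a b (x : 'rV[R]_a) (M : 'M[R]_(a, b)) (y : 'rV[R]_b) :
  dot (x *m M) y = dot x (y *m M^T).
Proof. by rewrite /dot trmx_mul trmxK mulmxA. Qed.

Lemma sigma_ge0 a b (W : 'M[R]_(a, b)) : 0 <= sigma_max W.
Proof. exact: sqrtr_ge0. Qed.

Lemma sigma_bound a b (W : 'M[R]_(a, b.+1)) (u : 'rV[R]_a) :
  rnorm (u *m W) <= sigma_max W * rnorm u.
Proof.
pose A := W^T *m W.
have Asym : A^T = A by rewrite /A trmx_mul trmxK.
have [D [evD bnd]] := spec_bound Asym.
pose E := [set x : R | eigenvalue A x].
have ubD : ubound E D.
  move=> x /= /eigenvalueP [v vA vn0].
  have := bnd v; rewrite vA dotZl.
  have vp : 0 < dot v v.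
    by rewrite lt_def dot_ge0 andbT; apply/eqP => /dot_eq0 h; move: vn0; rewrite h eqxx.
  by rewrite ler_pM2r.
have Dle : D <= sup E by apply: ub_le_sup; [exists D | ].
have D0 : 0 <= D.
  case/eigenvalueP: evD => v vA vn0.
  have vp : 0 < dot v v.
    by rewrite lt_def dot_ge0 andbT; apply/eqP => /dot_eq0 h; move: vn0; rewrite h eqxx.
  have : 0 <= dot (v *m A) v by rewrite /A mulmxA dot_mulmx dot_ge0.
  by rewrite vA dotZl pmulr_lge0.
set s := sup E.
have s0 : 0 <= s by apply: le_trans Dle.
set y := u *m W.
set N := dot y y.
have N0 : 0 <= N := dot_ge0 y.
have h1 : N <= rnorm u * rnorm (y *m W^T).
  by rewrite /N {1}/y dot_mulmx dot_le.
have h2 : rnorm (y *m W^T) ^+ 2 <= s * N.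
  rewrite rnorm2 dot_mulmx trmxK -mulmxA -/A dotC.
  apply: le_trans (bnd y) _; rewrite -/N; exact: ler_wpM2r.
have h3 : N <= s * rnorm u ^+ 2.
  have ru := rnorm_ge0 u; have rv := rnorm_ge0 (y *m W^T).
  have [->|Np] := eqVneq N 0; first by rewrite mulr_ge0 ?sqr_ge0.
  have Npos : 0 < N by rewrite lt_def Np N0.
  have h4 : N ^+ 2 <= rnorm u ^+ 2 * (s * N).
    apply: le_trans (_ : (rnorm u * rnorm (y *m W^T)) ^+ 2 <= _).
      by rewrite lerXn2r ?nnegrE ?mulr_ge0.
    by rewrite exprMn ler_wpM2l ?sqr_ge0.
  rewrite -(ler_pM2r Npos); move: h4; rewrite expr2; nra.
rewrite /sigma_max -/A -/E -/s rnormE -/N.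
have -> : rnorm u = Num.sqrt (rnorm u ^+ 2) by rewrite sqrtr_sqr ger0_norm // rnorm_ge0.
rewrite -sqrtrM //.
exact: ler_wsqrtr.
Qed.

End Sig.

End SigS.

Section Att.
Variable R : realType.

Definition escore N din dkey (Wq Wk : 'M[R]_(din, dkey)) (X : 'M[R]_(N, din)) i l :=
  expR ((row i X *m Wq *m Wk^T *m (row l X)^T) 0 0 / Num.sqrt (dkey%:R)).

Lemma rowcol00 m n (M : 'M[R]_(m, n)) i l : (row i (col l M)) 0 0 = M i l.
Proof. by rewrite !mxE. Qed.

Lemma entry_QK N din dkey (Wq Wk : 'M[R]_(din, dkey)) (X : 'M[R]_(N, din)) i l :
  (X *m Wq *m (X *m Wk)^T) i l = (row i X *m Wq *m Wk^T *m (row l X)^T) 0 0.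
Proof.
by rewrite tr_row -!row_mul colE mulmxA -colE rowcol00 trmx_mul !mulmxA.
Qed.

Lemma sum_pos N (F : 'I_N -> R) (j : 'I_N) : (forall l, 0 < F l) -> 0 < \sum_l F l.
Proof.
move=> h; rewrite (bigD1 j) //=; apply: (lt_le_trans (h j)).
by rewrite lerDl; apply: sumr_ge0 => l _; exact: ltW.
Qed.

Lemma attn_row N din dout dkey (Wq Wk : 'M[R]_(din, dkey)) (Wv : 'M[R]_(din, dout))
  (X : 'M[R]_(N, din)) i :
  row i (attn Wq Wk Wv X) =
  (\sum_l escore Wq Wk X i l)^-1 *: \sum_l escore Wq Wk X i l *: row l (X *m Wv).
Proof.
rewrite /attn.
set E := map_mx expR _.
have EE : forall i l, E i l = escore Wq Wk X i l.
  move=> i' l; rewrite /E /escore mxE [_ (_ *: _) i' l]mxE entry_QK mulrC //.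
set s := \row_(i0 < N) \sum_(l < N) E i0 l.
pose s' := \row_(i0 < N) (s 0 i0)^-1.
have spos j : 0 < s 0 j.
  by rewrite mxE; apply: (sum_pos j) => l; rewrite EE expR_gt0.
have h : diag_mx s' *m diag_mx s = 1%:M.
  rewrite mulmx_diag -diag_const_mx; congr diag_mx; apply/rowP => j.
  move: (spos j); rewrite !mxE => sp; by rewrite mulVf // gt_eqF.
have [_ su] := mulmx1_unit h.
have inv : invmx (diag_mx s) = diag_mx s'.
  by rewrite -[invmx _]mul1mx -h -mulmxA mulmxV // mulmx1.
rewrite inv -mulmxA row_mul row_diag_mx -scalemxAl -rowE row_mul mulmx_sum_row.
congr (_ *: _).
  by rewrite mxE [s 0 i]mxE; congr (_^-1); apply: eq_bigr => l _; rewrite EE.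
by apply: eq_bigr => l _; rewrite mxE EE.
Qed.


Lemma projE n (v y : 'rV[R]_n) :
  proj_perp v y = if y == 0 then v else v - (dot v y / dot y y) *: y.
Proof. by []. Qed.

Lemma proj_lin n a b (v w y : 'rV[R]_n) :
  proj_perp (a *: v + b *: w) y = a *: proj_perp v y + b *: proj_perp w y.
Proof.
rewrite !projE; case: eqP => _ //.
rewrite dotDl !dotZl; apply/rowP => j; rewrite !mxE; ring.
Qed.

Lemma dot_neq0 n (y : 'rV[R]_n) : y != 0 -> dot y y != 0.
Proof. by apply: contra => /eqP /dot_eq0 ->. Qed.

Lemma proj_self n (y : 'rV[R]_n) : proj_perp y y = 0.
Proof.
rewrite projE; case: eqP => [->//|/eqP yn0].
by rewrite mulfV ?dot_neq0 // scale1r subrr.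
Qed.

Lemma proj_le n (v y : 'rV[R]_n) : rnorm (proj_perp v y) <= rnorm v.
Proof.
rewrite projE; case: eqP => [_//|/eqP yn0].
have yp : 0 < dot y y by rewrite lt_def dot_neq0 // dot_ge0.
rewrite !rnormE; apply: ler_wsqrtr.
rewrite !dotBl !dotBr !dotZl !dotZr (dotC y v).
have -> : dot v v - dot v y / dot y y * dot v y -
    (dot v y / dot y y * dot v y - dot v y / dot y y * (dot v y / dot y y * dot y y))
    = dot v v - dot v y ^+ 2 / dot y y.
  by field; rewrite dot_neq0.
by rewrite lerBlDr lerDl divr_ge0 ?sqr_ge0 // ltW.
Qed.

End Att.

End Aux.
Import Aux.

Lemma sigma_bound' (R : realType) a b (W : 'M[R]_(a, b)) (u : 'rV[R]_a) : (0 < b)%N ->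
  rnorm (u *m W) <= sigma_max W * rnorm u.
Proof. case: b W => // b W _; exact: sigma_bound. Qed.

Theorem theorem1 (R : realType) (din dout dkey k m : nat)
  (Hdin : (0 < din)%N) (Hdout : (0 < dout)%N) (Hdkey : (0 < dkey)%N)
  (Hk : (0 < k)%N) (Hm : (0 < m)%N)
  (Wq Wk : 'M[R]_(din, dkey)) (Wv : 'M[R]_(din, dout))
  (X0 : 'M[R]_(m, din)) (Mu : R) (HMu : 0 < Mu) (Ystar : 'M[R]_(m, dout)) :
  let Mx := \big[Num.max/0]_(j < m) rnorm (row j X0) in
  let alpha := sigma_max Wq * sigma_max Wk * Mu * Mx / Num.sqrt (dkey%:R) in
  let g := fun i : 'I_m => \sum_(j < m)
      expR ((row i X0 *m Wq *m Wk^T *m (row j X0)^T) 0 0 / Num.sqrt (dkey%:R)) in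
  let gamma := fun i : 'I_m => expR alpha / g i * sigma_max Wv * Mu in
  let Ymax := attn Wq Wk Wv X0 in
  (exists i : 'I_m, rnorm (proj_perp (row i Ymax) (row i Ystar)) > k%:R * gamma i) ->
  forall U : 'M[R]_(k, din), (forall j : 'I_k, rnorm (row j U) <= Mu) ->
    dsubmx (attn Wq Wk Wv (col_mx U X0)) <> Ystar.
Proof.
move=> Mx alpha g gamma Ymax [i Hi] U HU Heq.
have cpos : 0 < Num.sqrt (dkey%:R : R) by rewrite sqrtr_gt0 ltr0n.
have sq0 := sigma_ge0 Wq; have sk0 := sigma_ge0 Wk; have sv0 := sigma_ge0 Wv.
have rowXd j : row (rshift k j) (col_mx U X0) = row j X0 by rewrite -row_dsubmx col_mxKd.
have rowXu j : row (lshift m j) (col_mx U X0) = row j U by rewrite -row_usubmx col_mxKu.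
have Mxb j : rnorm (row j X0) <= Mx by exact: le_bigmax.
have gE : g i = \sum_j escore Wq Wk X0 i j by [].
have gpos : 0 < g i by rewrite gE; apply: (sum_pos i) => l; exact: expR_gt0.
pose eU j := escore Wq Wk (col_mx U X0) (rshift k i) (lshift m j).
pose vU j := row j U *m Wv.
pose AU := \sum_j eU j *: vU j.
pose SU := \sum_j eU j.
have SU0 : 0 <= SU by apply: sumr_ge0 => j _; exact/ltW/expR_gt0.
pose AX := \sum_j escore Wq Wk X0 i j *: row j (X0 *m Wv).
have hYm : row i Ymax = (g i)^-1 *: AX by rewrite /Ymax attn_row.
have hY : row i Ystar = (SU + g i)^-1 *: (AU + AX).
  rewrite -Heq row_dsubmx attn_row big_split_ord [X in _^-1 *: X]big_split_ord /=.
  rewrite gE; congr (_^-1 *: (_ + _)).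
  - by congr (_ + _); apply: eq_bigr => j _; rewrite /eU /escore ?rowXd ?rowXu.
  - by apply: eq_bigr => j _; rewrite /eU /vU row_mul rowXu.
  - by apply: eq_bigr => j _; rewrite /escore !rowXd !row_mul rowXd.
set Y := row i Ystar in hY.
set Ym := row i Ymax in hYm Hi.
have SUg : 0 < SU + g i by apply: ltr_wpDl.
have hY2 : Y = (SU + g i)^-1 *: AU + ((SU + g i)^-1 * g i) *: Ym.
  by rewrite hY hYm scalerA mulfK ?gt_eqF // scalerDr.
have key : proj_perp AU Y = - (g i *: proj_perp Ym Y).
  have := proj_self Y; rewrite {1}hY2 proj_lin.
  rewrite -scalerA -scalerDr => /eqP; rewrite scaler_eq0 invr_eq0 gt_eqF //=.
  by rewrite addr_eq0 => /eqP.
have normeq : g i * rnorm (proj_perp Ym Y) <= rnorm AU.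
  apply: le_trans (proj_le AU Y).
  by rewrite key -scaleN1r !rnormZ normrN1 mul1r ger0_norm // ltW.
have AUb : rnorm AU <= k%:R * (expR alpha * (sigma_max Wv * Mu)).
  apply: le_trans (rnorm_sum _) _.
  apply: le_trans (_ : _ <= \sum_(j < k) (expR alpha * (sigma_max Wv * Mu))) _; last first.
    by rewrite sumr_const card_ord mulr_natl.
  apply: ler_sum => j _; rewrite rnormZ ger0_norm ?(ltW (expR_gt0 _)) //.
  apply: ler_pM; [exact/ltW/expR_gt0 | exact: rnorm_ge0 | | ].
    rewrite /eU /escore rowXd rowXu ler_expR /alpha ler_pM2r ?invr_gt0 //.
    have -> : (row i X0 *m Wq *m Wk^T *m (row j U)^T) 0 0
         = dot (row i X0 *m Wq) (row j U *m Wk) by rewrite /dot trmx_mul !mulmxA.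
    apply: le_trans (dot_le _ _) _.
    have h1 := @sigma_bound' R _ _ Wq (row i X0) Hdkey.
    have h2 := @sigma_bound' R _ _ Wk (row j U) Hdkey.
    have r1 := rnorm_ge0 (row i X0 *m Wq); have r2 := rnorm_ge0 (row j U *m Wk).
    have r3 := rnorm_ge0 (row i X0); have r4 := rnorm_ge0 (row j U).
    have h3 := Mxb i; have h4 := HU j.
    have h5 : rnorm (row i X0 *m Wq) <= sigma_max Wq * Mx.
      apply: le_trans h1 _; exact: ler_wpM2l.
    have h6 : rnorm (row j U *m Wk) <= sigma_max Wk * Mu.
      apply: le_trans h2 _; exact: ler_wpM2l.
    apply: le_trans (ler_pM r1 r2 h5 h6) _; rewrite le_eqVlt; apply/orP; left.
    by apply/eqP; ring.
  apply: le_trans (@sigma_bound' R _ _ Wv (row j U) Hdout) _; exact: ler_wpM2l.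
have := le_trans normeq AUb.
have : g i * (k%:R * gamma i) = k%:R * (expR alpha * (sigma_max Wv * Mu)).
  by rewrite /gamma; field; rewrite gt_eqF.
move=> <-; rewrite ler_pM2l //; move/(lt_le_trans Hi); by rewrite ltxx.
Qed.
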